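(* Let $H_1,H_2,H_3,H_4$ be the following graphs. $H_1$: vertices $v_1,\dots,v_5$, edges $v_1v_2,v_2v_3,v_3v_4,v_4v_5,v_5v_1,v_2v_4,v_3v_5$. $H_2$: vertices $v_1,\dots,v_6$, edges $v_1v_2,v_2v_3,v_3v_4,v_4v_5,v_5v_6,v_6v_1,v_2v_5,v_3v_6$. $H_3$: vertices $v_1,\dots,v_7$, edges $v_1v_2,\dots,v_6v_7,v_7v_1$ (the $7$-cycle) together with $v_2v_5,v_3v_6,v_4v_7$. $H_4$: vertices $v_1,\dots,v_6$, edges $v_1v_2,v_2v_3,v_3v_4,v_4v_5,v_5v_6,v_6v_1,v_2v_6,v_3v_5$. Let $G$ be a cubic graph containing $H_i$ as an induced subgraph, for some $1\le i\le 4$. Then any minimum $2$-conversion set of $G$ contains exactly $2$ vertices from each copy of $H_i$.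
   Context: For a graph $G=(V,E)$ and a set $S_0\subseteq V$, the irreversible $2$-threshold conversion process is defined by: for $t=1,2,\dots$, $S_t$ is obtained from $S_{t-1}$ by adjoining all vertices having at least $2$ neighbours in $S_{t-1}$. $S_0$ is a $2$-conversion set if $S_t=V$ for some $t\ge 0$; a minimum $2$-conversion set is one of smallest size. *)

(* Defs.v *)
From mathcomp Require Import all_boot.
Set Implicit Arguments. Unset Strict Implicit. Unset Printing Implicit Defensive.

Definition simple_graph (T : finType) (e : rel T) : Prop :=
  symmetric e /\ irreflexive e.

Definition cubic (T : finType) (e : rel T) : Prop :=
  forall v : T, #|[set u | e v u]| = 3.

Definition conv_step (T : finType) (e : rel T) (S : {set T}) : {set T} :=
  S :|: [set v | 2 <= #|[set u in S | e v u]|].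

Definition conv_iter (T : finType) (e : rel T) (t : nat) (S0 : {set T}) :
  {set T} := iter t (conv_step e) S0.

Definition is_conversion_set (T : finType) (e : rel T) (S0 : {set T}) : Prop :=
  exists t : nat, conv_iter e t S0 = [set: T].

Definition is_min_conversion_set (T : finType) (e : rel T) (S0 : {set T})
  : Prop :=
  is_conversion_set e S0 /\
  forall S : {set T}, is_conversion_set e S -> #|S0| <= #|S|.

(* The graphs H_1..H_4: number of vertices and edge lists (vertices 1-indexed
   as in the paper, v_k labelled k). *)
Definition Hn (i : nat) : nat :=
  match i with 1 => 5 | 2 => 6 | 3 => 7 | 4 => 6 | _ => 0 end.

Definition Hedges (i : nat) : seq (nat * nat) :=
  match i with
  | 1 => [:: (1,2); (2,3); (3,4); (4,5); (5,1); (2,4); (3,5)]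
  | 2 => [:: (1,2); (2,3); (3,4); (4,5); (5,6); (6,1); (2,5); (3,6)]
  | 3 => [:: (1,2); (2,3); (3,4); (4,5); (5,6); (6,7); (7,1);
             (2,5); (3,6); (4,7)]
  | 4 => [:: (1,2); (2,3); (3,4); (4,5); (5,6); (6,1); (2,6); (3,5)]
  | _ => [::]
  end.

(* adjacency of H_i on 'I_(Hn i): ordinal a stands for v_(a+1). *)
Definition Hadj (i : nat) (a b : 'I_(Hn i)) : bool :=
  ((a.+1, b.+1) \in Hedges i) || ((b.+1, a.+1) \in Hedges i).

Definition induced_copy (i : nat) (T : finType) (e : rel T)
  (f : 'I_(Hn i) -> T) : Prop :=
  injective f /\ forall a b : 'I_(Hn i), e (f a) (f b) = Hadj a b.

(* Main.v *)
Require Import Defs.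
From mathcomp Require Import all_boot.
From mathcomp Require Import zify.
Set Implicit Arguments. Unset Strict Implicit. Unset Printing Implicit Defensive.

Section Gen.
Variables (T : finType) (e : rel T).
Hypothesis cub : cubic e.

Definition nb (X : {set T}) v := [set u in X | e v u].

Lemma nb_split X v : #|nb X v| + #|nb (~: X) v| = 3.
Proof.
rewrite -(cub v) -(cardsID X [set u | e v u]); congr (_ + _); apply: eq_card => u;
  by rewrite !inE andbC.
Qed.

Lemma no_core_conv S U : is_conversion_set e S -> U :&: S = set0 ->
  (forall v, v \in U -> 2 <= #|nb U v|) -> U = set0.
Proof.
move=> [t Ht] US cU.
have H : forall k, conv_iter e k S :&: U = set0.
  elim=> [|k IH]; first by rewrite /conv_iter /= setIC.
  rewrite /conv_iter iterS -/(conv_iter e k S).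
  apply/setP => v; rewrite /conv_step !inE.
  case vU : (v \in U); rewrite ?andbF ?andbT //.
  have vX : v \notin conv_iter e k S.
    by apply/negP => vX; have := in_set0 v; rewrite -IH inE vX vU.
  rewrite (negbTE vX) /=.
  have sub : nb (conv_iter e k S) v \subset nb (~: U) v.
    apply/subsetP => u; rewrite !inE => /andP[uX ->]; rewrite andbT.
    by apply/negP => uU; have := in_set0 u; rewrite -IH inE uX uU.
  have := subset_leq_card sub; have := nb_split U v; have := cU v vU.
  rewrite /nb; lia.
by rewrite -(H t) Ht setTI.
Qed.

Lemma conv_of_no_core S :
  (forall U, U :&: S = set0 -> (forall v, v \in U -> 2 <= #|nb U v|) -> U = set0) ->
  is_conversion_set e S.
Proof.
move=> Hc.
have ext (X : {set T}) : X \subset conv_step e X by apply: subsetUl.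
have [k Hk] : exists k, conv_iter e k.+1 S = conv_iter e k S.
  have H : forall t, (exists k, conv_iter e k.+1 S = conv_iter e k S)
                     \/ t <= #|conv_iter e t S|.
    elim=> [|t [H|IH]]; [by right | by left |].
    case: (eqVneq (conv_iter e t.+1 S) (conv_iter e t S)) => [E|N].
      by left; exists t.
    right.
    have : conv_iter e t S \proper conv_iter e t.+1 S.
      by rewrite properEneq eq_sym N (ext _).
    by move/proper_card; apply: leq_ltn_trans.
  case: (H #|T|.+1) => // hh.
  by have := leq_trans hh (max_card _); rewrite ltnn.
exists k.
have SX : S \subset conv_iter e k S.
  elim: k {Hk} => [|k IH]; first exact: subxx.
  exact: (subset_trans IH (ext _)).
set X := conv_iter e k S in SX Hk *.
have Hk' : conv_step e X = X by exact: Hk.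
have E : ~: X = set0.
  apply: Hc.
  - apply/setP => v; rewrite !inE; apply/negbTE/negP => /andP[vX vS].
    by move/subsetP: SX => /(_ v vS); rewrite (negbTE vX).
  - move=> v vX.
    have : v \notin conv_step e X by rewrite Hk' -in_setC.
    rewrite /conv_step !inE negb_or => /andP[_]; rewrite -ltnNge => lt2.
    have := nb_split X v; rewrite /nb; lia.
by rewrite -[X]setCK E setC0.
Qed.

Lemma card_ord_count n (P : nat -> bool) : #|[set b : 'I_n | P b]| = count P (iota 0 n).
Proof.
rewrite cardsE cardE /enum_mem size_filter -enumT -val_enum_ord count_map.
by apply: eq_count => x; rewrite !inE.
Qed.

Lemma ord_in_iota n (a : 'I_n) : val a \in iota 0 n.
Proof. by rewrite mem_iota /= ltn_ord. Qed.

Fixpoint peelN n (adjN : nat -> nat -> bool) (s : seq nat) : bool :=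
  if s is p :: s' then
    (count (fun b => (b \in p :: s') && adjN p b) (iota 0 n)
       + (3 - count (adjN p) (iota 0 n)) < 2) && peelN n adjN s'
  else true.

Lemma peel n (adj : rel 'I_n) (adjN : nat -> nat -> bool)
  (hadj : forall a b : 'I_n, adj a b = adjN a b)
  (s : seq nat) (C : {set 'I_n}) : peelN n adjN s ->
  (forall a, a \in C -> val a \in s) ->
  (forall a, a \in C -> 2 <= #|[set b in C | adj a b]| + (3 - #|[set b | adj a b]|)) ->
  C = set0.
Proof.
elim: s C => [|p s IH] C /=.
  move=> _ sub _; apply/setP => a; rewrite inE; apply/negbTE/negP => /sub //.
move=> /andP[hp hs] sub cC; have cC' := cC; apply: IH hs _ cC' => a aC.
have := sub a aC; rewrite inE => /orP[/eqP E|//]; exfalso.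
have le : #|[set b in C | adj a b]| <= #|[set b : 'I_n | (val b \in p :: s) && adjN p b]|.
  apply/subset_leq_card/subsetP => b; rewrite !inE => /andP[/sub bs ab].
  by move: bs; rewrite -E -hadj ab andbT !inE.
have e2 : #|[set b | adj a b]| = #|[set b : 'I_n | adjN p b]|.
  by apply: eq_card => b; rewrite !inE hadj E.
move: le; rewrite (card_ord_count n (fun k => (k \in p :: s) && adjN p k)) => le.
move: e2; rewrite (card_ord_count n (adjN p)) => e2.
have := cC a aC; move: hp le e2.
set x := #|_|; set y := #|_|; set z := count _ _; set w := count _ _. lia.
Qed.

Lemma main n (adj : rel 'I_n) (adjN : nat -> nat -> bool) (f : 'I_n -> T) (s0 : 'I_n)
  (ws : seq (seq nat)) (a1 a2 : 'I_n) (p : seq nat) :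
  (forall a b : 'I_n, adj a b = adjN a b) ->
  injective f -> (forall a b, e (f a) (f b) = adj a b) ->
  all (fun s => [&& s \notin nth [::] ws s, has (fun k => k < n) (nth [::] ws s) &
        all (fun a => (a \in nth [::] ws s) ==>
          (2 <= count (fun b => (b \in nth [::] ws s) && adjN a b) (iota 0 n))) (iota 0 n)])
      (iota 0 n) ->
  all (fun x => (x != val a1) && (x != val a2) ==> (x \in p)) (iota 0 n) ->
  peelN n adjN p ->
  forall S, is_min_conversion_set e S -> #|S :&: [set f a | a : 'I_n]| = 2.
Proof.
move=> hadj inj fe /allP HW /allP Hcov Hpeel S [Sconv Smin].
set F := [set f a | a : 'I_n].
have lo : 2 <= #|S :&: F|.
  rewrite leqNgt; apply/negP => lt2.
  have [s Hs] : exists s : 'I_n, forall a, f a \in S -> val a \in nth [::] ws s -> False.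
    case: (set_0Vmem (S :&: F)) => [E|[x xSF]].
      exists s0 => a fa; exfalso.
      have : f a \in S :&: F by rewrite inE fa imset_f.
      by rewrite E inE.
    have := xSF; rewrite inE => /andP[_ /imsetP[s _ xfs]].
    exists s => a fa.
    have -> : a = s.
      apply: inj; move/card_le1_eqP: lt2 => /(_ (f s) (f a)); apply.
        by rewrite -xfs.
      by rewrite inE fa imset_f.
    by have /and3P[sW _ _] := HW _ (ord_in_iota s); rewrite (negbTE sW).
  have /and3P[_ Wn cW] := HW _ (ord_in_iota s).
  set w := nth [::] ws s in Hs Wn cW.
  set U := f @: [set x : 'I_n | val x \in w].
  have U0 : U = set0.
    apply: (no_core_conv Sconv).
    - apply/setP => u; rewrite !inE; apply/negbTE/negP => /andP[/imsetP[c cC ->] fcS].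
      by move: cC; rewrite inE; apply: Hs.
    - move=> v /imsetP[c cC ->].
      move: cC; rewrite inE => cC.
      have := implyP (allP cW _ (ord_in_iota c)) cC.
      rewrite -card_ord_count => h; apply: (leq_trans h).
      rewrite -(card_imset _ inj); apply/subset_leq_card/subsetP => u.
      move=> /imsetP[b]; rewrite inE => /andP[bC ab] ->.
      by rewrite !inE imset_f ?inE // fe hadj.
  case/hasP: Wn => k kw kn.
  by have := in_set0 (f (Ordinal kn)); rewrite -U0 imset_f // inE.
have hi : #|S :&: F| <= 2.
  rewrite leqNgt; apply/negP => gt2.
  set S' := (S :\: F) :|: [set f a1; f a2].
  have cS' : #|S'| < #|S|.
    have := cardsU (S :\: F) [set f a1; f a2]; have := cards2 (f a1) (f a2).
    have := cardsID F S. rewrite -/S'.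
    case: (f a1 != f a2) => /=; lia.
  have : is_conversion_set e S'.
    apply: conv_of_no_core => U US' cU.
    have notS' : forall u, u \in U -> u \notin S'.
      by move=> u uU; apply/negP => uS; have := in_set0 u; rewrite -US' inE uU uS.
    case: (set_0Vmem (f @^-1: U)) => [E|[c cC]].
      apply: (no_core_conv Sconv) cU.
      apply/setP => u; rewrite !inE; apply/negbTE/negP => /andP[uU uS].
      case uF : (u \in F).
        case/imsetP: uF => c _ uc; subst u.
        by have := in_set0 c; rewrite -E inE uU.
      by have := notS' u uU; rewrite !inE uF uS.
    exfalso.
    have C0 : f @^-1: U = set0.
      apply: (peel hadj Hpeel).
      - move=> a; rewrite inE => aU.
        apply: (implyP (Hcov _ (ord_in_iota a))).
        have := notS' _ aU; rewrite !inE negb_or => /andP[_].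
        by rewrite !(inj_eq inj) negb_or.
      - move=> a; rewrite inE => aU.
        have h := cU _ aU.
        have sub : nb U (f a) \subset f @: [set b in f @^-1: U | adj a b] :|: nb (~: F) (f a).
          apply/subsetP => u; rewrite !inE => /andP[uU fu].
          case uF : (u \in F); last by rewrite fu orbT.
          case/imsetP: uF => b _ ub; subst u.
          by rewrite imset_f // !inE uU -fe fu.
        have nF : nb F (f a) = f @: [set b | adj a b].
          apply/setP => u; rewrite !inE; apply/andP/imsetP.
            move=> [/imsetP[b _ ->]]; rewrite fe => ab; exists b => //; by rewrite inE.
          move=> [b]; rewrite inE => ab ->; by rewrite imset_f // fe.
        have := nb_split F (f a); rewrite nF card_imset //.
        have := subset_leq_card sub.
        have := cardsU (f @: [set b in f @^-1: U | adj a b]) (nb (~: F) (f a)).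
        have := card_imset [set b in f @^-1: U | adj a b] inj.
        move: h.
        set x1 := #|nb U (f a)|; set x2 := #|f @: _|; set x3 := #|[set b in _ | _]|.
        set x4 := #|nb (~: F) (f a)|; set x5 := #|_ :|: _|; set x6 := #|_ :&: _|.
        set x7 := #|[set b | adj a b]|.
        lia.
    by have := in_set0 c; rewrite -C0 cC.
  by move/Smin; rewrite leqNgt cS'.
by apply/eqP; rewrite eqn_leq hi lo.
Qed.

End Gen.


Definition hadjN (i x y : nat) : bool :=
  ((x.+1, y.+1) \in Hedges i) || ((y.+1, x.+1) \in Hedges i).

Theorem lemma5p5 (T : finType) (e : rel T) (i : nat) :
  simple_graph e -> cubic e -> 1 <= i <= 4 ->
  forall f : 'I_(Hn i) -> T, induced_copy e f ->
  forall S : {set T}, is_min_conversion_set e S ->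
  #|S :&: [set f a | a : 'I_(Hn i)]| = 2.
Proof.
move=> _ cub hi f [inj fe] S hS.
case: i hi f inj fe S hS => [|[|[|[|[|i]]]]] // _ f inj fe S hS.
- refine (@main T e cub 5 (@Hadj 1) (hadjN 1) f (@Ordinal 5 0 isT)
    [:: [:: 1;2;3;4]; [:: 2;3;4]; [:: 0;1;3;4]; [:: 0;1;2;4]; [:: 1;2;3]]
    (@Ordinal 5 0 isT) (@Ordinal 5 2 isT) [:: 1;3;4] (fun a b => erefl) inj fe _ _ _ S hS);
  by vm_compute.
- refine (@main T e cub 6 (@Hadj 2) (hadjN 2) f (@Ordinal 6 0 isT)
    [:: [:: 1;2;3;4;5]; [:: 2;3;4;5]; [:: 0;1;4;5]; [:: 0;1;2;4;5]; [:: 0;1;2;5]; [:: 1;2;3;4]]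
    (@Ordinal 6 0 isT) (@Ordinal 6 2 isT) [:: 1;5;4;3] (fun a b => erefl) inj fe _ _ _ S hS);
  by vm_compute.
- refine (@main T e cub 7 (@Hadj 3) (hadjN 3) f (@Ordinal 7 0 isT)
    [:: [:: 1;2;3;4;5;6]; [:: 2;3;4;5;6]; [:: 0;1;3;4;5;6]; [:: 0;1;2;4;5;6]; [:: 0;1;2;3;5;6]; [:: 0;1;2;3;4;6]; [:: 1;2;3;4;5]]
    (@Ordinal 7 1 isT) (@Ordinal 7 3 isT) [:: 2;4;5;6;0] (fun a b => erefl) inj fe _ _ _ S hS);
  by vm_compute.
- refine (@main T e cub 6 (@Hadj 4) (hadjN 4) f (@Ordinal 6 0 isT)
    [:: [:: 1;2;3;4;5]; [:: 2;3;4]; [:: 0;1;5]; [:: 0;1;2;4;5]; [:: 0;1;5]; [:: 2;3;4]]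
    (@Ordinal 6 0 isT) (@Ordinal 6 2 isT) [:: 1;5;4;3] (fun a b => erefl) inj fe _ _ _ S hS);
  by vm_compute.
Qed.
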